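(* Let $x$ be a grid function with $x_s\neq0$ at every node that satisfies the scheme (S) with $\check B=\frac{2(\cos\tau-1)}{\tau^2}\,x$ (discretization for the parabolic bottom $b(x)=-x^2/2$). Then at every node $$\Big(x_t\cos t-x\,\frac{\cos\hat t-\cos t}{\tau}\Big)_{\check t}+\Big(\cos t\,\big((\hat x_s\check x_s)^{-1}-\alpha^2x_s\big)\Big)_{\bar s}=0,$$ where $t$ is the time coordinate of the node and $\hat t=t+\tau$.
   Context: Fix mesh steps $\tau>0$, $h>0$ and a constant $\alpha\in\mathbb R$. A grid function is a real-valued function $f=f(t,s)$ on the uniform orthogonal mesh $\{(n\tau,kh): n,k\in\mathbb Z\}$; at the node $(n\tau,kh)$ the symbol $t$ denotes the number $n\tau$. Shifts: $\hat f=f(t+\tau,s)$, $\check f=f(t-\tau,s)$, $f_+=f(t,s+h)$, $f_-=f(t,s-h)$; a shift applied to a composite expression shifts the whole expression, including explicit occurrences of $t$ (e.g. $\hat x_s$ is $x_s$ evaluated at $(t+\tau,s)$). Differences: $f_t=(\hat f-f)/\tau$, $f_{\check t}=(f-\check f)/\tau$, $f_s=(f_+-f)/h$, $f_{\bar s}=(f-f_-)/h$; iterated differences compose, e.g. $x_{t\check t}=(x_t)_{\check t}=(\hat x-2x+\check x)/\tau^2$ and $x_{s\bar s}=(x_s)_{\bar s}=(x_+-2x+x_-)/h^2$. Given a grid function $x$ with $x_s\neq0$ everywhere and a grid function $\check B$ (an approximation of the bottom-slope term), the scheme (S) is the requirement that at every node $$x_{t\check t}-\alpha^2x_{s\bar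 s}+\Big(\frac{1}{\hat x_s\check x_s}\Big)_{\bar s}-\check B=0 .$$ *)

(* Defs.v *)
From Stdlib Require Import Reals ZArith.
Open Scope R_scope.

(* A grid function on the mesh {(n tau, k h) : n,k in Z}, indexed by (n,k). *)
Definition grid := Z -> Z -> R.

Definition tnode (tau : R) (n : Z) : R := IZR n * tau.

Definition ghat (f : grid) : grid := fun n k => f (n + 1)%Z k.
Definition gcheck (f : grid) : grid := fun n k => f (n - 1)%Z k.

Definition d_t (tau : R) (f : grid) : grid := fun n k => (ghat f n k - f n k) / tau.
Definition d_tb (tau : R) (f : grid) : grid := fun n k => (f n k - gcheck f n k) / tau.
Definition d_s (h : R) (f : grid) : grid := fun n k => (f n (k + 1)%Z - f n k) / h.
Definition d_sb (h : R) (f : grid) : grid := fun n k => (f n k - f n (k - 1)%Z) / h.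

Definition scheme (tau h alpha : R) (x Bc : grid) : Prop :=
  forall n k : Z,
    d_tb tau (d_t tau x) n k - alpha ^ 2 * d_sb h (d_s h x) n k
    + d_sb h (fun n' k' => / (ghat (d_s h x) n' k' * gcheck (d_s h x) n' k')) n k
    - Bc n k = 0.

Definition Bparab (tau : R) (x : grid) : grid :=
  fun n k => 2 * (cos tau - 1) / tau ^ 2 * x n k.

(* Main.v *)
Require Import Defs.
From Stdlib Require Import Reals ZArith Lra.
Open Scope R_scope.

Theorem mainTheorem8 (tau h alpha : R) (x : grid) :
  0 < tau -> 0 < h ->
  (forall n k : Z, d_s h x n k <> 0) ->
  scheme tau h alpha x (Bparab tau x) ->
  forall n k : Z,
    d_tb tau (fun n' k' =>
      d_t tau x n' k' * cos (tnode tau n')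
      - x n' k' * (cos (tnode tau (n' + 1)%Z) - cos (tnode tau n')) / tau) n k
    + d_sb h (fun n' k' =>
      cos (tnode tau n') *
        (/ (ghat (d_s h x) n' k' * gcheck (d_s h x) n' k') - alpha ^ 2 * d_s h x n' k')) n k
    = 0.
Proof.
  intros Ht Hh Hs HS n k.
  specialize (HS n k).
  unfold scheme, d_tb, d_t, d_sb, d_s, ghat, gcheck, Bparab, tnode in *.
  replace (n - 1 + 1)%Z with n in * by ring.
  replace (k - 1 + 1)%Z with k in * by ring.
  rewrite !plus_IZR, !minus_IZR.
  set (I1 := / ((x (n+1)%Z (k+1)%Z - x (n+1)%Z k) / h * ((x (n-1)%Z (k+1)%Z - x (n-1)%Z k) / h))) in *.
  set (I2 := / ((x (n+1)%Z k - x (n+1)%Z (k-1)%Z) / h * ((x (n-1)%Z k - x (n-1)%Z (k-1)%Z) / h))) in *.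
  replace ((IZR n + 1) * tau) with (IZR n * tau + tau) by ring.
  replace ((IZR n - 1) * tau) with (IZR n * tau - tau) by ring.
  rewrite cos_plus, cos_minus.
  set (a := IZR n * tau) in *.
  match type of HS with ?L = 0 => transitivity (cos a * L) end.
  - field; split; lra.
  - rewrite HS; ring.
Qed.
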